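(* Let $n$ be a nonnegative integer and let $x,y$ be complex numbers such that no denominator below vanishes. Then \[ \sum_{k=0}^{2n}(-1)^k\binom{2n}{k}\frac{\binom{x+k}{k}\binom{y+k}{k}}{\binom{x+2n}{k}\binom{y+2n}{k}}H_{k}(x) =\frac{1}{2}\frac{\binom{x+n}{n}\binom{y+n}{n}\binom{1+x+y+2n}{2n}}{\binom{x+2n}{2n}\binom{y+2n}{2n}\binom{1+x+y+n}{n}} \big\{H_n(x)-H_n(1+x+y)+H_{2n}(1+x+y)\big\}. \]
   Context: For complex $z$ and a nonnegative integer $k$, $\binom{z}{k}=\frac{z(z-1)\cdots(z-k+1)}{k!}$ (with $\binom{z}{0}=1$). For complex $x$ and nonnegative integer $m$, the generalized harmonic number is $H_0(x)=0$ and $H_m(x)=\sum_{j=1}^m\frac{1}{x+j}$ for $m\ge 1$. The parameters are assumed to be such that all denominators (including those in the harmonic numbers) are nonzero. *)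

(* Defs.v *)
From mathcomp Require Import all_boot all_order all_algebra.
From mathcomp Require Import complex.
From mathcomp Require Import reals.
Set Implicit Arguments. Unset Strict Implicit. Unset Printing Implicit Defensive.
Import Order.TTheory GRing.Theory Num.Theory.
Local Open Scope ring_scope.

Definition binom {F : fieldType} (z : F) (k : nat) : F :=
  (\prod_(i < k) (z - i%:R)) / (k`!)%:R.

Definition harm {F : fieldType} (m : nat) (x : F) : F :=
  \sum_(1 <= j < m.+1) (x + j%:R)^-1.

(* Main.v *)
Require Import Defs.
From mathcomp Require Import all_boot all_order all_algebra.
From mathcomp Require Import complex.
From mathcomp Require Import reals.
From mathcomp Require Import ring lra zify.
Import Order.TTheory GRing.Theory Num.Theory.
Local Open Scope ring_scope.
Set Implicit Arguments. Unset Strict Implicit. Unset Printing Implicit Defensive.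

Definition rise {R : comRingType} (z : R) (m : nat) : R := \prod_(0 <= i < m) (z + (i.+1)%:R).
Definition Qf {R : comRingType} (z : R) (m : nat) : R := \prod_(0 <= i < m) (z + i%:R).

Lemma rise0 (R : comRingType) (z : R) : rise z 0 = 1.
Proof. by rewrite /rise big_geq. Qed.
Lemma riseS (R : comRingType) (z : R) m : rise z m.+1 = rise z m * (z + (m.+1)%:R).
Proof. by rewrite /rise big_nat_recr. Qed.
Lemma Qf0 (R : comRingType) (z : R) : Qf z 0 = 1.
Proof. by rewrite /Qf big_geq. Qed.
Lemma QfS (R : comRingType) (z : R) m : Qf z m.+1 = z * rise z m.
Proof. by rewrite /Qf big_nat_recl // addr0. Qed.

Lemma factr_neq0 (F : fieldType) (hF : forall m, (m.+1)%:R != 0 :> F) m : (m`!)%:R != 0 :> F.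
Proof. by have := fact_gt0 m; case: (m`!) => // p _; exact: hF. Qed.

Lemma binr (F : fieldType) (hF : forall m, (m.+1)%:R != 0 :> F) a b :
  ('C(a + b, a))%:R = (a + b)`!%:R / ((a`!)%:R * (b`!)%:R) :> F.
Proof.
rewrite -(bin_fact (leq_addr b a)) addKn !natrM mulrK //.
by rewrite unitfE mulf_neq0 // factr_neq0.
Qed.

Definition Fd {F : comRingType} (x y : F) n k :=
  (-1)^+k * ('C(2*n,k))%:R * rise x k * rise x (2*n-k) * rise y k * rise y (2*n-k).
Definition Gd {F : comRingType} (x y : F) n k :=
  match k with 0 => 0 | k'.+1 =>
   (-1)^+k' * ('C((2*n).+1,k'))%:R * rise x k'.+1 * rise y k'.+1 *
   (Qf x ((2*n).+1-k') * Qf y ((2*n).+1-k') * (x+y+n%:R+2)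
    - (2*n%:R+1-k'%:R) * rise x (2*n-k') * rise y (2*n-k')
      * ((2*n%:R+2)*(x+y) + (n%:R+1)*(4*n%:R+4-k'%:R))) end.
Definition c1 {F : comRingType} (x y : F) n : F := x+y+n%:R+2.
Definition c0 {F : comRingType} (x y : F) n : F :=
  -(2*(2*n%:R+1)*(x+n%:R+1)*(y+n%:R+1)*(x+y+2*n%:R+2)*(x+y+2*n%:R+3)).

Lemma tele_mid (F : fieldType) (hF : forall m, (m.+1)%:R != 0 :> F) (x y : F) n k' j :
  (2*n = k'.+1 + j)%N ->
  c1 x y n * Fd x y n.+1 k'.+1 + c0 x y n * Fd x y n k'.+1 = Gd x y n k'.+2 - Gd x y n k'.+1.
Proof.
move=> e.
have hn : (n%:R : F) = (k'%:R + j%:R + 1) / 2.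
  have h2 : (2 : F) != 0 by exact: (hF 1%N).
  apply: (mulIf h2); rewrite mulfVK // mulrC -natrM e; rewrite -addn1 !natrD; ring.
rewrite /Fd /Gd /c1 /c0.
have -> : (2 * n.+1 = k'.+1 + j.+2)%N by lia.
rewrite e.
have -> : (k'.+1 + j.+2 - k'.+1 = j.+2)%N by lia.
have -> : (k'.+1 + j - k'.+1 = j)%N by lia.
have -> : ((k'.+1 + j).+1 - k'.+1 = j.+1)%N by lia.
have -> : ((k'.+1 + j).+1 - k' = j.+2)%N by lia.
have -> : ((k'.+1 + j) - k' = j.+1)%N by lia.
have -> : ((k'.+1 + j).+1 = k'.+1 + j.+1)%N by lia.
rewrite (binr hF k'.+1 j.+1) (binr hF k'.+1 j.+2) (binr hF k'.+1 j).
have -> : ((k'.+1 + j.+1) = k' + j.+2)%N by lia.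
rewrite (binr hF k' j.+2).
have -> : (k'.+1 + j.+2 = (k'+j).+3)%N by lia.
have -> : (k'.+1 + j = (k'+j).+1)%N by lia.
have -> : (k' + j.+2 = (k'+j).+2)%N by lia.
rewrite !factS !QfS !riseS !natrM hn.
rewrite -!natr1 natrD.
rewrite !exprS. field. by rewrite ?natr1 ?factr_neq0 ?hF // (hF 1).
Qed.
Lemma tele0 (F : comRingType) (x y : F) n :
  c1 x y n * Fd x y n.+1 0 + c0 x y n * Fd x y n 0 = Gd x y n 1 - Gd x y n 0.
Proof.
rewrite /Fd /Gd /c1 /c0 !bin0 !subn0.
have -> : (2 * n.+1 = (2*n).+2)%N by lia.
rewrite !QfS !riseS !rise0 !expr0 -!natr1 !natrM.
ring.
Qed.

Lemma tele1 (F : comRingType) (x y : F) n :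
  c1 x y n * Fd x y n.+1 (2*n).+1 + c0 x y n * Fd x y n (2*n).+1
  = Gd x y n (2*n).+2 - Gd x y n (2*n).+1.
Proof.
rewrite /Fd /Gd /c1 /c0.
have -> : (2 * n.+1 = (2*n).+2)%N by lia.
rewrite (bin_small (ltnSn (2*n))) binn !binSn.
have -> : ((2*n).+2 - (2*n).+1 = 1)%N by lia.
have -> : ((2*n) - (2*n).+1 = 0)%N by lia.
have -> : ((2*n).+1 - (2*n).+1 = 0)%N by lia.
have -> : ((2*n).+1 - (2*n) = 1)%N by lia.
rewrite subnn !QfS !Qf0 !riseS !rise0 !exprS -!natr1 !natrM.
ring.
Qed.

Lemma tele2 (F : comRingType) (x y : F) n :
  c1 x y n * Fd x y n.+1 (2*n).+2 + c0 x y n * Fd x y n (2*n).+2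
  = Gd x y n (2*n).+3 - Gd x y n (2*n).+2.
Proof.
rewrite /Fd /Gd /c1 /c0.
have -> : (2 * n.+1 = (2*n).+2)%N by lia.
rewrite (bin_small (ltnSn (2*n).+1)) (bin_small (_ : 2*n < (2*n).+2)%N) // !binn.
have -> : ((2*n).+1 - (2*n).+2 = 0)%N by lia.
have -> : ((2*n) - (2*n).+1 = 0)%N by lia.
have -> : ((2*n) - (2*n).+2 = 0)%N by lia.
have -> : ((2*n).+1 - (2*n).+1 = 0)%N by lia.
rewrite subnn !Qf0 !rise0 !exprS -!natr1 !natrM.
ring.
Qed.

Lemma tele (F : fieldType) (hF : forall m, (m.+1)%:R != 0 :> F) (x y : F) n k :
  (k <= (2*n).+2)%N ->
  c1 x y n * Fd x y n.+1 k + c0 x y n * Fd x y n k = Gd x y n k.+1 - Gd x y n k.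
Proof.
case: k => [_|k hk]; first exact: tele0.
case: (ltngtP k.+1 (2*n).+1) => h.
- by apply: (@tele_mid F hF x y n k (2*n - k.+1)); lia.
- have -> : k = (2*n).+1 by lia. exact: tele2.
- have -> : k = (2*n) by lia. exact: tele1.
Qed.

Definition Sd {F : comRingType} (x y : F) n := \sum_(0 <= k < (2*n).+1) Fd x y n k.
Definition Dd {F : fieldType} (x y : F) n :=
  (2*n)`!%:R / n`!%:R * rise x n * rise y n * \prod_(0 <= i < n) (x + y + (n+i+2)%:R).

Lemma Sd_ext (F : comRingType) (x y : F) n :
  Sd x y n = \sum_(0 <= k < (2*n).+3) Fd x y n k.
Proof.
have h : ((2*n).+1 <= (2*n).+3)%N by lia.
rewrite /Sd [RHS](big_cat_nat (n := (2*n).+1)) //=.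
rewrite [X in _ = _ + X](_ : _ = 0) ?addr0 //.
rewrite big_nat_cond big1 // => k /andP[/andP[hk _] _].
by rewrite /Fd bin_small // mulr0 !mul0r.
Qed.

Lemma Srec (F : fieldType) (hF : forall m, (m.+1)%:R != 0 :> F) (x y : F) n :
  c1 x y n * Sd x y n.+1 + c0 x y n * Sd x y n = 0.
Proof.
have e : (2 * n.+1).+1 = (2*n).+3 by lia.
rewrite (Sd_ext x y n) /Sd e !mulr_sumr -big_split /=.
rewrite (@telescope_sumr_eq _ _ _ (Gd x y n)) //.
  by rewrite /= bin_small // mulr0 !mul0r subrr.
move=> k hk; apply: tele => //; lia.
Qed.

Lemma prodP (F : comRingType) (x y : F) n :
  \prod_(0 <= i < n.+1) (x + y + (n.+1+i+2)%:R) * (x + y + (n+2)%:R)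
  = \prod_(0 <= i < n) (x + y + (n+i+2)%:R) * (x + y + (n+n+2)%:R) * (x+y+(n+n.+1+2)%:R).
Proof.
transitivity (\prod_(0 <= i < n.+2) (x + y + (n+i+2)%:R)); last by rewrite !big_nat_recr.
rewrite [RHS]big_nat_recl // addn0 [RHS]mulrC.
by congr (_ * _); apply: eq_bigr => i _; rewrite addSnnS.
Qed.

Lemma Drec (F : fieldType) (hF : forall m, (m.+1)%:R != 0 :> F) (x y : F) n :
  c1 x y n * Dd x y n.+1 + c0 x y n * Dd x y n = 0.
Proof.
have -> : c1 x y n * Dd x y n.+1 = (2*n.+1)`!%:R / (n.+1)`!%:R * rise x n.+1 * rise y n.+1 *
   (\prod_(0 <= i < n.+1) (x + y + (n.+1+i+2)%:R) * (x + y + (n+2)%:R)).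
  by rewrite /Dd /c1 natrD; ring.
rewrite prodP /Dd /c0.
have -> : (2 * n.+1 = (2*n).+2)%N by lia.
rewrite !factS !riseS -!natr1 !natrM !natrD.
field.
by rewrite addrC natr1 ?factr_neq0 ?hF.
Qed.

Lemma dixon (F : fieldType) (hF : forall m, (m.+1)%:R != 0 :> F) (x y : F)
  (hc : forall m, c1 x y m != 0) n : Sd x y n = Dd x y n.
Proof.
elim: n => [|n IH].
  rewrite /Sd /Dd big_nat1 /Fd /= !big_geq // !rise0.
  rewrite muln0 bin0 fact0 !mulr1n expr0 !mulr1 mul1r.
  by rewrite invr1.
apply: (mulfI (hc n)).
have h1 := Srec hF x y n; have h2 := Drec hF x y n.
rewrite IH in h1.
have e1 : c1 x y n * Sd x y n.+1 = - (c0 x y n * Dd x y n) by apply/eqP; rewrite -addr_eq0 h1.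
have e2 : c1 x y n * Dd x y n.+1 = - (c0 x y n * Dd x y n) by apply/eqP; rewrite -addr_eq0 h2.
by rewrite e1 e2.
Qed.

Lemma rise_rmorph (R S : comRingType) (f : {rmorphism R -> S}) (z : R) m :
  f (rise z m) = rise (f z) m.
Proof.
rewrite /rise rmorph_prod; apply: eq_bigr => i _; by rewrite rmorphD rmorph_nat.
Qed.

Lemma Sd_rmorph (R S : comRingType) (f : {rmorphism R -> S}) (x y : R) n :
  f (Sd x y n) = Sd (f x) (f y) n.
Proof.
rewrite /Sd rmorph_sum; apply: eq_bigr => k _.
by rewrite /Fd !rmorphM rmorphXn rmorphN1 rmorph_nat !rise_rmorph.
Qed.

Lemma dixon' (F : fieldType) (hF : forall m, (m.+1)%:R != 0 :> F) (x y : F)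
  (hc : forall m, c1 x y m != 0) n :
  n`!%:R * Sd x y n = (2*n)`!%:R * rise x n * rise y n * \prod_(0 <= i < n) (x + y + (n+i+2)%:R).
Proof.
rewrite dixon // /Dd; field; exact: factr_neq0.
Qed.

Lemma pdixon (K : fieldType) (hK : forall m, (m.+1)%:R != 0 :> K) (y : K) n :
  n`!%:R * Sd 'X y%:P n
  = (2*n)`!%:R * rise 'X n * rise y%:P n * \prod_(0 <= i < n) ('X + y%:P + (n+i+2)%:R).
Proof.
apply/eqP; rewrite -(tofrac_eq (R := {poly K})); apply/eqP.
rewrite !rmorphM !rmorph_nat Sd_rmorph !rise_rmorph rmorph_prod.
have hF : forall m, (m.+1)%:R != 0 :> {fraction {poly K}}.
  move=> m; rewrite -(rmorph_nat (tofrac (R := {poly K}))) tofrac_eq0.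
  by rewrite -polyC_natr polyC_eq0.
rewrite dixon' //.
  congr (_ * _).
  by apply: eq_bigr => i _; rewrite !rmorphD !rmorph_nat ?rmorph1.
move=> m.
have e : tofrac ('X + (y + (m%:R+2))%:P) = c1 (tofrac 'X) (tofrac y%:P) m.
  rewrite /c1 !rmorphD /= !rmorph_nat ?rmorph1; ring.
by rewrite -e tofrac_eq0; apply: monic_neq0; exact: monicXaddC.
Qed.

Lemma hprodX (K : fieldType) (a : nat -> K) (x : K) m :
  (\prod_(0 <= i < m) ('X + (a i)%:P)).[x] = \prod_(0 <= i < m) (x + a i).
Proof. by rewrite horner_prod; apply: eq_bigr => i _; rewrite hornerD hornerX hornerC. Qed.

Lemma dprodX (K : fieldType) (a : nat -> K) (x : K) m :
  (forall i, (i < m)%N -> x + a i != 0) ->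
  (\prod_(0 <= i < m) ('X + (a i)%:P))^`().[x]
  = (\prod_(0 <= i < m) (x + a i)) * \sum_(0 <= i < m) (x + a i)^-1.
Proof.
elim: m => [|m IH] h.
  by rewrite !big_geq // derivC hornerC mulr0.
rewrite !big_nat_recr //= derivM derivD derivX derivC addr0 mulr1.
rewrite hornerD !hornerM (hprodX a x m) IH; last by move=> i hi; apply: h; lia.
rewrite hornerD hornerX hornerC.
have hm : x + a m != 0 by apply: h.
field.
exact: hm.
Qed.

Lemma rise_poly (K : fieldType) m :
  rise ('X : {poly K}) m = \prod_(0 <= i < m) ('X + ((i.+1)%:R)%:P).
Proof. by apply: eq_bigr => i _; rewrite polyC_natr. Qed.

Lemma harmE (K : fieldType) m (x : K) : harm m x = \sum_(0 <= i < m) (x + (i.+1)%:R)^-1.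
Proof. by rewrite /harm big_add1. Qed.

Lemma hrise (K : fieldType) (x : K) m : (rise 'X m).[x] = rise x m.
Proof. by rewrite rise_poly hprodX. Qed.

Lemma drise (K : fieldType) (x : K) m :
  (forall i, (i < m)%N -> x + (i.+1)%:R != 0) ->
  (rise 'X m)^`().[x] = rise x m * harm m x.
Proof. by move=> h; rewrite rise_poly dprodX // harmE. Qed.

Lemma dS (K : fieldType) (x y : K) n
  (hx : forall i, (i < 2*n)%N -> x + (i.+1)%:R != 0) :
  (Sd 'X y%:P n)^`().[x] = \sum_(0 <= k < (2*n).+1)
     (-1)^+k * ('C(2*n,k))%:R * rise x k * rise x (2*n-k) * rise y k * rise y (2*n-k)
     * (harm k x + harm (2*n-k) x).
Proof.
rewrite /Sd raddf_sum horner_sum; apply: eq_big_nat => k hk.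
have -> : Fd 'X y%:P n k = ((-1)^+k * ('C(2*n,k))%:R * rise y k * rise y (2*n-k))%:P
             * (rise 'X k * rise 'X (2*n-k)).
  rewrite /Fd !rmorphM rmorphXn rmorphN1 rmorph_nat -!(rise_rmorph polyC); ring.
rewrite mul_polyC /= derivZ hornerZ derivM hornerD !hornerM !hrise !drise; first ring.
- by move=> i hi; apply: hx; lia.
- by move=> i hi; apply: hx; lia.
Qed.

Lemma PK (K : fieldType) (z : K) k m :
  (\prod_(i < k) (z + (k+m)%:R - i%:R)) * rise z m = rise z (k+m).
Proof.
elim: k => [|k IH]; first by rewrite big_ord0 mul1r add0n.
rewrite big_ord_recl addSn riseS -IH.
rewrite (eq_bigr (fun i : 'I_k => z + (k+m)%:R - i%:R)); last first.
  by move=> i _; rewrite lift0 -!natr1; ring.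
by rewrite subr0 -natr1; ring.
Qed.

Lemma BS (K : fieldType) (hK : forall m, (m.+1)%:R != 0 :> K) (z : K) k m :
  binom (z + (k+m)%:R) k * k`!%:R * rise z m = rise z (k+m).
Proof. by rewrite /binom divfK ?factr_neq0 // PK. Qed.

Lemma B1 (K : fieldType) (hK : forall m, (m.+1)%:R != 0 :> K) (z : K) k :
  binom (z + k%:R) k = rise z k / k`!%:R.
Proof.
have := BS hK z k 0; rewrite addn0 rise0 mulr1 => <-.
by rewrite mulfK // factr_neq0.
Qed.

Lemma rise0f (K : fieldType) m : rise (0 : K) m = m`!%:R.
Proof.
elim: m => [|m IH]; first by rewrite rise0.
by rewrite riseS IH add0r factS natrM mulrC.
Qed.

Lemma B3 (K : fieldType) (hK : forall m, (m.+1)%:R != 0 :> K) N k :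
  (k <= N)%N -> binom (N%:R : K) k = 'C(N, k)%:R.
Proof.
move=> hk; have e := BS hK 0 k (N - k); rewrite subnKC // add0r !rise0f in e.
rewrite -(bin_fact hk) !natrM in e.
apply: (mulIf (mulf_neq0 (factr_neq0 hK k) (factr_neq0 hK (N-k)))).
by rewrite mulrA e.
Qed.

Lemma rise_neq0 (K : fieldType) (z : K) m :
  (forall i, (i < m)%N -> z + (i.+1)%:R != 0) -> rise z m != 0.
Proof.
elim: m => [|m IH] h; first by rewrite rise0 oner_neq0.
rewrite riseS mulf_neq0 //; [apply: IH => i hi|]; apply: h; lia.
Qed.

Lemma rise_neq0_inv (K : fieldType) (z : K) m :
  rise z m != 0 -> forall i, (i < m)%N -> z + (i.+1)%:R != 0.
Proof.
elim: m => [|m IH] h i hi; first by [].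
move: h; rewrite riseS mulf_eq0 negb_or => /andP[h1 h2].
case: (ltngtP i m) => him; [exact: IH|lia|by rewrite him].
Qed.

Lemma riseD (K : fieldType) (z : K) n m :
  rise z (n + m) = rise z n * \prod_(0 <= i < m) (z + ((n+i).+1)%:R).
Proof.
rewrite /rise (big_cat_nat (n := n)) //=; last lia.
congr (_ * _); rewrite -{1}[n]add0n big_addn addKn.
by apply: eq_bigr => i _; rewrite addnC.
Qed.

Lemma harmD (K : fieldType) (z : K) n m :
  harm (n + m) z = harm n z + \sum_(0 <= i < m) (z + ((n+i).+1)%:R)^-1.
Proof.
rewrite !harmE (big_cat_nat (n := n)) //=; last lia.
congr (_ + _); rewrite -{1}[n]add0n big_addn addKn.
by apply: eq_bigr => i _; rewrite addnC.
Qed.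

Lemma dnatM (K : fieldType) (c : nat) (p : {poly K}) x :
  ((c%:R : {poly K}) * p)^`().[x] = c%:R * p^`().[x].
Proof. by rewrite -polyC_natr mul_polyC derivZ hornerZ. Qed.

Unset Implicit Arguments.
Set Strict Implicit.

Theorem theorem1 (R : realType) (n : nat) (x y : R[i])
  (hbx : forall k : nat, (k <= 2 * n)%N -> binom (x + (2 * n)%:R) k != 0)
  (hby : forall k : nat, (k <= 2 * n)%N -> binom (y + (2 * n)%:R) k != 0)
  (hbxy : binom (1 + x + y + n%:R) n != 0)
  (hhx : forall j : nat, (1 <= j <= 2 * n)%N -> x + j%:R != 0)
  (hhxy : forall j : nat, (1 <= j <= 2 * n)%N -> 1 + x + y + j%:R != 0) :
  \sum_(0 <= k < (2 * n).+1)
     (-1) ^+ k * (binom (2 * n)%:R k : R[i])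
     * ((binom (x + k%:R) k * binom (y + k%:R) k)
        / (binom (x + (2 * n)%:R) k * binom (y + (2 * n)%:R) k))
     * harm k x
  = 2^-1 * ((binom (x + n%:R) n * binom (y + n%:R) n
             * binom (1 + x + y + (2 * n)%:R) (2 * n))
            / (binom (x + (2 * n)%:R) (2 * n) * binom (y + (2 * n)%:R) (2 * n)
               * binom (1 + x + y + n%:R) n))
    * (harm n x - harm n (1 + x + y) + harm (2 * n) (1 + x + y)).
Proof.
have hK : forall m, (m.+1)%:R != 0 :> R[i] by move=> m; rewrite pnatr_eq0.
have hx : forall i, (i < 2*n)%N -> x + (i.+1)%:R != 0 by move=> i hi; apply: hhx; lia.
have hB : rise y (2*n) != 0.
  have := hby (2*n) (leqnn _); rewrite B1 //; apply: contra => /eqP ->; by rewrite mul0r.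
have hy := rise_neq0_inv hB.
have hA : rise x (2*n) != 0 := rise_neq0 hx.
have hZ : rise (1+x+y) n != 0.
  by move: hbxy; rewrite B1 //; apply: contra => /eqP ->; rewrite mul0r.
have hzi : forall i, (i < n)%N -> x + (y + (n+i+2)%:R) != 0.
  move=> i hi; have hj : (1 <= (n+i).+1 <= 2*n)%N by lia.
  have := hhxy _ hj.
  by rewrite (_ : 1 + x + y + ((n+i).+1)%:R = x + (y + (n+i+2)%:R)) // -!natr1 !natrD; ring.
pose w k := (-1)^+k * ('C(2*n,k))%:R * rise x k * rise x (2*n-k) * rise y k * rise y (2*n-k).
have eL : \sum_(0 <= k < (2 * n).+1)
     (-1) ^+ k * (binom (2 * n)%:R k : R[i])
     * ((binom (x + k%:R) k * binom (y + k%:R) k)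
        / (binom (x + (2 * n)%:R) k * binom (y + (2 * n)%:R) k))
     * harm k x = (rise x (2*n) * rise y (2*n))^-1 * \sum_(0 <= k < (2*n).+1) w k * harm k x.
  rewrite mulr_sumr; apply: eq_big_nat => k /andP[_ hk].
  have hk' : (k <= 2*n)%N by lia.
  rewrite B3 // !B1 //.
  have ex := BS hK x k (2*n-k); rewrite subnKC // in ex.
  have ey := BS hK y k (2*n-k); rewrite subnKC // in ey.
  have hrx : rise x (2*n-k) != 0 by apply: rise_neq0 => i hi; apply: hx; lia.
  have hry : rise y (2*n-k) != 0 by apply: rise_neq0 => i hi; apply: hy; lia.
  have hfk := factr_neq0 hK k.
  have -> : binom (x + (2*n)%:R) k = rise x (2*n) / (k`!%:R * rise x (2*n-k)).
    by rewrite -ex; field; rewrite ?hfk ?hrx.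
  have -> : binom (y + (2*n)%:R) k = rise y (2*n) / (k`!%:R * rise y (2*n-k)).
    by rewrite -ey; field; rewrite ?hfk ?hry.
  by rewrite /w; field; rewrite hA hB hrx hry hfk.
have eSym : \sum_(0 <= k < (2*n).+1) w k * harm (2*n-k) x
            = \sum_(0 <= k < (2*n).+1) w k * harm k x.
  rewrite big_nat_rev add0n; apply: eq_big_nat => k /andP[_ hk].
  have hk' : (k <= 2*n)%N by lia.
  rewrite subSS subKn // /w subKn // bin_sub //.
  have -> : (-1)^+(2*n-k) = (-1)^+k :> R[i].
    by rewrite -signr_odd oddB // oddM /= signr_odd.
  ring.
have eD := dS y hx.
rewrite (eq_big_nat _ _ (fun k _ => mulrDr (w k) (harm k x) (harm (2*n-k) x))) in eD.
rewrite big_split /= eSym in eD.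
set T := \sum_(0 <= k < (2*n).+1) w k * harm k x in eL eD.
pose a i := y + (n+i+2)%:R.
have eP := congr1 (fun p => p^`().[x]) (pdixon hK y n).
rewrite /= dnatM eD in eP.
rewrite (_ : \prod_(0 <= i < n) ('X + y%:P + (n+i+2)%:R) = \prod_(0 <= i < n) ('X + (a i)%:P)) in eP;
  last by apply: eq_bigr => i _; rewrite /a (rmorphD polyC) -[in LHS]polyC_natr addrA.
rewrite -(rise_rmorph polyC) in eP.
rewrite (_ : (2 * n)`!%:R * rise 'X n * (rise y n)%:P * \prod_(0 <= i < n) ('X + (a i)%:P)
   = (2 * n)`!%:R * ((rise y n)%:P * (rise 'X n * \prod_(0 <= i < n) ('X + (a i)%:P)))) in eP;
   last by ring.
rewrite dnatM mul_polyC derivZ hornerZ derivM hornerD !hornerM hrise hprodX drise in eP;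
  last by move=> i hi; apply: hx; lia.
rewrite dprodX in eP; last by move=> i hi; apply: hzi.
set Q := \prod_(0 <= i < n) (x + a i) in eP.
set s := \sum_(0 <= i < n) (x + a i)^-1 in eP.
have eZ : rise (1+x+y) (2*n) = rise (1+x+y) n * Q.
  rewrite (_ : (2*n = n + n)%N); last by lia.
  rewrite riseD /Q; congr (_ * _); apply: eq_bigr => i _.
  by rewrite /a -!natr1 !natrD; ring.
have eH : harm (2*n) (1+x+y) = harm n (1+x+y) + s.
  rewrite (_ : (2*n = n + n)%N); last by lia.
  rewrite harmD /s; congr (_ + _); apply: eq_bigr => i _.
  by rewrite /a -!natr1 !natrD; congr (_^-1); ring.
have hfn := factr_neq0 hK n.
have hf2n := factr_neq0 hK (2*n).
have h2 : (2 : R[i]) != 0 by exact: (hK 1%N).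
have eT : T = (2 * n)`!%:R * (rise y n * (rise x n * harm n x * Q + rise x n * (Q * s)))
              / (2 * n`!%:R).
  by rewrite -eP; field.
rewrite eL !B1 // eZ eH eT.
field.
by rewrite ?hA ?hB ?hZ ?hfn ?hf2n ?h2.
Qed.
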